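(* Let $\gamma$ be a cocycle and set $V_{\mathbb{R}}^\gamma:=\{z\in V_{\mathbb{R}}:\lambda(z)\ge\mathrm{val}_L(\gamma^{dom}(\lambda))\text{ for all }\lambda\in\Lambda\}$ and, for $w\in W$, $z_w:=-val(\gamma(w^{-1},\cdot))\in V_{\mathbb{R}}$. Then $V_{\mathbb{R}}^\gamma$ is the convex hull in $V_{\mathbb{R}}$ of the finitely many points $-z_w$, $w\in W$.
   Context: $L$ is a finite extension of $\mathbb{Q}_p$, $K$ a complete extension field of $\mathbb{Q}_p$ containing $L$; $|\ |_L$ normalized absolute value of $L$, $\mathrm{val}_L:K^\times\to\mathbb{R}$ with $\mathrm{val}_L(L^\times)=\mathbb{Z}$. $G$ is the $L$-points of an $L$-split connected reductive group, $T$ a maximal $L$-split torus, $P$ a Borel subgroup containing $T$, $W=N(T)/T$, $U_0$ a maximal compact subgroup special with respect to $T$, $\Lambda=T/(U_0\cap T)$, $\lambda:T\to\Lambda$ the projection, $W$ acting on $\Lambda$ by conjugation. $T^{--}=\{t:|\alpha(t)|_L\ge1$ for all roots $\alpha$ positive for $P\}$, $\Lambda^{--}=\lambda(T^{--})$. $V_{\mathbb{R}}=\mathrm{Hom}(\Lambda,\mathbb{R})$; each $\lambda\in\Lambda$ is viewed as a linear form on $V_{\mathbb{R}}$; $val:\mathrm{Hom}(\Lambda,K^\times)\to V_{\mathbb{R}}$, $\zeta\mapsto\mathrm{val}_L\circ\zeta$. A cocycle is $\gamma:W\times\Lambda\to K^\times$ with (a) $\gamma(w,\lambda\mu)=\gamma(w,\lambda)\gamma(w,\mu)$;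 (b) $\gamma(vw,\lambda)=\gamma(v,{}^w\lambda)\gamma(w,\lambda)$; (c) $|\gamma(w,\lambda)|\le1$ for $\lambda\in\Lambda^{--}$; (d) $\gamma(w,\lambda)=1$ if ${}^w\lambda=\lambda$. $\gamma^{dom}(\lambda):=\gamma(w,\lambda)$ for any $w$ with ${}^w\lambda\in\Lambda^{--}$. *)

(* Defs.v *)
From HB Require Import structures.
From mathcomp Require Import all_boot all_order all_algebra.
From Stdlib Require Import ClassicalEpsilon.
Set Implicit Arguments. Unset Strict Implicit. Unset Printing Implicit Defensive.
Import Order.TTheory GRing.Theory Num.Theory.
Local Open Scope ring_scope.

(* Cocharacter lattice Lambda = X_*(T) = Z^n as column vectors,
   characters X^*(T) = Z^n as row vectors, natural pairing <a, l>. *)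
Definition pairing n (a : 'rV[int]_n) (l : 'cV[int]_n) : int := (a *m l) ord0 ord0.

(* A (reduced) root datum: a list of pairs (root alpha, coroot alpha^v). *)
Definition root_datum n (rd : seq ('rV[int]_n * 'cV[int]_n)) : Prop :=
  [/\ uniq (map fst rd) /\ uniq (map snd rd),
      (forall p, p \in rd -> pairing p.1 p.2 = 2),
      (forall p q, p \in rd -> q \in rd ->
         q.1 - (pairing q.1 p.2) *: p.1 \in map fst rd),
      (forall p q, p \in rd -> q \in rd ->
         q.2 - (pairing p.1 q.2) *: p.2 \in map snd rd)
    & (forall p, p \in rd -> 2%:R *: p.1 \notin map fst rd)].

(* Positive system (Borel P containing T): given by a regular cocharacter xi. *)
Definition regular n (rd : seq ('rV[int]_n * 'cV[int]_n)) (xi : 'cV[int]_n) : Prop :=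
  forall p, p \in rd -> pairing p.1 xi != 0.

Definition positive n (xi : 'cV[int]_n) (a : 'rV[int]_n) : bool := 0 < pairing a xi.

Definition antidom n (rd : seq ('rV[int]_n * 'cV[int]_n)) (xi : 'cV[int]_n)
  (l : 'cV[int]_n) : Prop :=
  forall p, p \in rd -> positive xi p.1 -> pairing p.1 l <= 0.

Definition refl n (p : 'rV[int]_n * 'cV[int]_n) : 'M[int]_n := 1%:M - p.2 *m p.1.

(* Weyl group W, as a subgroup of GL(Lambda) generated by the reflections;
   w acts by ^w l = w *m l. *)
Inductive inW n (rd : seq ('rV[int]_n * 'cV[int]_n)) : 'M[int]_n -> Prop :=
  | inW1 : inW rd 1%:M
  | inWs p w : p \in rd -> inW rd w -> inW rd (refl p *m w).

(* Cocycle gamma : W x Lambda -> K^x ; |x| <= 1 is expressed as val x >= 0. *)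
Definition cocycle n (rd : seq ('rV[int]_n * 'cV[int]_n)) (xi : 'cV[int]_n)
  (R : realFieldType) (K : fieldType) (val : K -> R)
  (gamma : 'M[int]_n -> 'cV[int]_n -> K) : Prop :=
  [/\ (forall w l, inW rd w -> gamma w l != 0),
      (forall w l m, inW rd w -> gamma w (l + m) = gamma w l * gamma w m),
      (forall v w l, inW rd v -> inW rd w ->
         gamma (v *m w) l = gamma v (w *m l) * gamma w l),
      (forall w l, inW rd w -> antidom rd xi l -> 0 <= val (gamma w l))
    & (forall w l, inW rd w -> w *m l = l -> gamma w l = 1)].

Definition gdom n (rd : seq ('rV[int]_n * 'cV[int]_n)) (xi : 'cV[int]_n)
  (K : fieldType) (gamma : 'M[int]_n -> 'cV[int]_n -> K) (l : 'cV[int]_n) : K :=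
  gamma (epsilon (inhabits (1%:M : 'M[int]_n))
           (fun w => inW rd w /\ antidom rd xi (w *m l))) l.

(* V_R = Hom(Lambda, R): additive maps Lambda -> R; lambda(z) := z lambda. *)
Definition in_VR n (R : realFieldType) (z : 'cV[int]_n -> R) : Prop :=
  forall l m, z (l + m) = z l + z m.

Definition Vgamma n (rd : seq ('rV[int]_n * 'cV[int]_n)) (xi : 'cV[int]_n)
  (R : realFieldType) (K : fieldType) (val : K -> R)
  (gamma : 'M[int]_n -> 'cV[int]_n -> K) (z : 'cV[int]_n -> R) : Prop :=
  in_VR z /\ forall l, val (gdom rd xi gamma l) <= z l.

Definition zw n (R : realFieldType) (K : fieldType) (val : K -> R)
  (gamma : 'M[int]_n -> 'cV[int]_n -> K) (w : 'M[int]_n) : 'cV[int]_n -> R :=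
  fun l => - val (gamma (invmx w) l).

Definition in_hull (T : Type) (R : realFieldType) (S : (T -> R) -> Prop)
  (z : T -> R) : Prop :=
  exists (m : nat) (c : 'I_m -> R) (pt : 'I_m -> T -> R),
    [/\ forall i, 0 <= c i, \sum_i c i = 1, forall i, S (pt i)
      & forall t, z t = \sum_i c i * pt i t].

(* Main.v *)
Require Import Defs.
From mathcomp Require Import all_boot all_order all_algebra.
Import Order.TTheory GRing.Theory Num.Theory.
Local Open Scope ring_scope.
From mathcomp Require Import ring lra.
From Stdlib Require Import ClassicalEpsilon.
Set Implicit Arguments. Unset Strict Implicit. Unset Printing Implicit Defensive.

Section Farkas.
Variable R : realFieldType.

Definition ip N (u v : 'rV[R]_N) : R := \sum_(j < N) u 0 j * v 0 j.

Lemma ipDl N (u v w : 'rV[R]_N) : ip (u + v) w = ip u w + ip v w.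
Proof. rewrite /ip -big_split; apply: eq_bigr => j _; by rewrite mxE mulrDl. Qed.
Lemma ipDr N (u v w : 'rV[R]_N) : ip w (u + v) = ip w u + ip w v.
Proof. rewrite /ip -big_split; apply: eq_bigr => j _; by rewrite mxE mulrDr. Qed.
Lemma ipZl N a (u w : 'rV[R]_N) : ip (a *: u) w = a * ip u w.
Proof. rewrite /ip mulr_sumr; apply: eq_bigr => j _; by rewrite mxE mulrA. Qed.
Lemma ipZr N a (u w : 'rV[R]_N) : ip w (a *: u) = a * ip w u.
Proof. rewrite /ip mulr_sumr; apply: eq_bigr => j _; by rewrite mxE mulrCA. Qed.
Lemma ipNl N (u w : 'rV[R]_N) : ip (- u) w = - ip u w.
Proof. by rewrite -scaleN1r ipZl mulN1r. Qed.
Lemma ipNr N (u w : 'rV[R]_N) : ip w (- u) = - ip w u.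
Proof. by rewrite -scaleN1r ipZr mulN1r. Qed.
Lemma ipBl N (u v w : 'rV[R]_N) : ip (u - v) w = ip u w - ip v w.
Proof. by rewrite ipDl ipNl. Qed.
Lemma ipBr N (u v w : 'rV[R]_N) : ip w (u - v) = ip w u - ip w v.
Proof. by rewrite ipDr ipNr. Qed.
Lemma ip_sumr N I (r : seq I) (P : pred I) (F : I -> 'rV[R]_N) w :
  ip w (\sum_(i <- r | P i) F i) = \sum_(i <- r | P i) ip w (F i).
Proof.
elim/big_rec2: _ => [|i x y _ <-]; last by rewrite ipDr.
by rewrite /ip big1 // => j _; rewrite mxE mulr0.
Qed.
Lemma ipC N (u v : 'rV[R]_N) : ip u v = ip v u.
Proof. by rewrite /ip; apply: eq_bigr => j _; rewrite mulrC. Qed.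

Lemma ip_self_gt0 N (b : 'rV[R]_N) : b != 0 -> 0 < ip b b.
Proof.
move=> bn0.
have [j bj] : exists j, b 0 j != 0.
  apply/existsP; apply: contraR bn0; rewrite negb_exists => /forallP H.
  apply/eqP/matrixP => i j; rewrite mxE (ord1 i); exact/eqP/negPn/H.
rewrite /ip (bigD1 j) //= ltr_pwDl //.
  by rewrite -expr2 lt_def sqr_ge0 sqrf_eq0 bj.
by apply: sumr_ge0 => k _; rewrite -expr2 sqr_ge0.
Qed.

Lemma farkas N m (A : 'I_m -> 'rV[R]_N) (b : 'rV[R]_N) :
  (exists mu : 'I_m -> R, (forall i, 0 <= mu i) /\ b = \sum_i mu i *: A i) \/
  (exists y, (forall i, 0 <= ip y (A i)) /\ ip y b < 0).
Proof.
elim: m A b => [|m IH] A b.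
  have [->|bn0] := eqVneq b 0.
    by left; exists (fun _ => 0); split => [[]//|]; rewrite big_ord0.
  right; exists (- b); split => [[]//|]; by rewrite ipNl oppr_lt0 ip_self_gt0.
pose A' i := A (lift ord0 i); pose a := A ord0.
have ext (mu' : 'I_m -> R) c : (forall i, 0 <= mu' i) -> 0 <= c ->
   b = c *: a + \sum_i mu' i *: A' i ->
   exists mu : 'I_m.+1 -> R, (forall i, 0 <= mu i) /\ b = \sum_i mu i *: A i.
  move=> H1 H2 Hb; exists (fun i => oapp mu' c (unlift ord0 i)); split.
    by move=> i; case: (unlift ord0 i) => /=.
  rewrite big_ord_recl unlift_none /= Hb; congr (_ + _).
  by apply: eq_bigr => i _; rewrite liftK.
have [[mu' [H1 H2]]|[y [Hy1 Hy2]]] := IH A' b.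
  left; apply: (ext mu' 0) => //; by rewrite scale0r add0r.
have [ya0|ya0] := leP 0 (ip y a).
  right; exists y; split => [i|//]; case: (unliftP ord0 i) => [j ->|->] //.
  exact: Hy1.
pose A'' i := A' i - (ip y (A' i) / ip y a) *: a.
pose b' := b - (ip y b / ip y a) *: a.
have yan0 : ip y a != 0 by rewrite lt_eqF.
have [[mu [H1 H2]]|[y' [Hy'1 Hy'2]]] := IH A'' b'.
  left; pose c := (ip y b - \sum_i mu i * ip y (A' i)) / ip y a.
  apply: (ext mu c) => //.
    rewrite /c ler_ndivlMr // mul0r subr_le0; apply: le_trans (ltW Hy2) _.
    by apply: sumr_ge0 => i _; rewrite mulr_ge0.
  have -> : b = b' + (ip y b / ip y a) *: a by rewrite /b' subrK.
  rewrite H2 /A'' /c.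
  have -> : \sum_i mu i *: (A' i - (ip y (A' i) / ip y a) *: a) =
     \sum_i mu i *: A' i - ((\sum_i mu i * ip y (A' i)) / ip y a) *: a.
    rewrite mulr_suml scaler_suml -sumrB; apply: eq_bigr => i _.
    by rewrite scalerBr scalerA mulrA.
  by rewrite mulrBl scalerBl [RHS]addrC addrA addrAC.
right; exists (y' - (ip y' a / ip y a) *: y).
have key v : ip (y' - (ip y' a / ip y a) *: y) v =
    ip y' (v - (ip y v / ip y a) *: a).
  rewrite ipBl ipBr ipZl ipZr; congr (_ - _).
  rewrite mulrAC [RHS]mulrAC; congr (_ * _); exact: mulrC.
split; last by rewrite key.
move=> i; case: (unliftP ord0 i) => [j ->|->]; first by rewrite key; exact: Hy'1.
by rewrite key -/a divff // scale1r subrr /ip big1 // => k _; rewrite mxE mulr0.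
Qed.

Lemma farkas_conv n m (P : 'I_m -> 'rV[R]_n) (z : 'rV[R]_n) :
  (exists c : 'I_m -> R, [/\ forall i, 0 <= c i, \sum_i c i = 1 &
        z = \sum_i c i *: P i]) \/
  (exists phi : 'rV[R]_n, forall i, ip phi z < ip phi (P i)).
Proof.
pose one : 'rV[R]_1 := const_mx 1.
have [[mu [H1 H2]]|[y [Hy1 Hy2]]] :=
   farkas (fun i => row_mx (P i) one) (row_mx z one).
  left; exists mu; split => //.
    have := congr1 (fun M : 'rV_(n + 1) => M 0 (rshift n (0 : 'I_1))) H2.
    rewrite row_mxEr mxE summxE => h; rewrite {}h; apply: eq_bigr => i _.
    by rewrite mxE row_mxEr mxE mulr1.
  apply/matrixP => i j; rewrite (ord1 i) summxE.
  have := congr1 (fun M : 'rV_(n + 1) => M 0 (lshift 1 j)) H2.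
  rewrite row_mxEl summxE => ->; apply: eq_bigr => k _.
  by rewrite mxE row_mxEl mxE.
right; exists (lsubmx y) => i.
have ipsplit (u : 'rV[R]_n) : ip y (row_mx u one) = ip (lsubmx y) u + rsubmx y 0 0.
  rewrite /ip big_split_ord /= big_ord1; congr (_ + _).
    by apply: eq_bigr => j _; rewrite row_mxEl mxE.
  by rewrite row_mxEr mxE mulr1 mxE.
have := Hy1 i; have := Hy2; rewrite !ipsplit => h1 h2.
rewrite -(ltrD2r (rsubmx y 0 0)); exact: lt_le_trans h1 h2.
Qed.

End Farkas.

Section Common.
Variable R : realFieldType.

Definition mR m k (M : 'M[int]_(m, k)) : 'M[R]_(m, k) := map_mx (intr : int -> R) M.

Lemma mRM m k p (A : 'M[int]_(m, k)) (B : 'M[int]_(k, p)) : mR (A *m B) = mR A *m mR B.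
Proof. exact: (map_mxM (intr : {rmorphism int -> R})). Qed.
Lemma mRD m k (A B : 'M[int]_(m, k)) : mR (A + B) = mR A + mR B.
Proof. by apply/matrixP => i j; rewrite !mxE intrD. Qed.
Lemma mRN m k (A : 'M[int]_(m, k)) : mR (- A) = - mR A.
Proof. by apply/matrixP => i j; rewrite !mxE intrN. Qed.
Lemma mRB m k (A B : 'M[int]_(m, k)) : mR (A - B) = mR A - mR B.
Proof. by rewrite mRD mRN. Qed.
Lemma mRZ m k c (A : 'M[int]_(m, k)) : mR (c *: A) = c%:~R *: mR A.
Proof. by apply/matrixP => i j; rewrite !mxE intrM. Qed.
Lemma mR1 k : mR (1%:M : 'M[int]_k) = 1%:M.
Proof. exact: (map_mx1 (intr : {rmorphism int -> R})). Qed.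
Lemma mR0 m k : mR (0 : 'M[int]_(m, k)) = 0.
Proof. by apply/matrixP => i j; rewrite !mxE. Qed.
Lemma mR_pairing k (a : 'rV[int]_k) (l : 'cV[int]_k) :
  (mR a *m mR l) 0 0 = (pairing a l)%:~R.
Proof. by rewrite -mRM mxE. Qed.

Lemma pairingD k (a : 'rV[int]_k) l m : pairing a (l + m) = pairing a l + pairing a m.
Proof. by rewrite /pairing mulmxDr mxE. Qed.
Lemma pairingZ k (a : 'rV[int]_k) c l : pairing a (c *: l) = c * pairing a l.
Proof. by rewrite /pairing -scalemxAr mxE. Qed.
Lemma pairingN k (a : 'rV[int]_k) l : pairing a (- l) = - pairing a l.
Proof. by rewrite /pairing mulmxN mxE. Qed.
Lemma pairingB k (a : 'rV[int]_k) l m : pairing a (l - m) = pairing a l - pairing a m.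
Proof. by rewrite pairingD pairingN. Qed.

Lemma sum_seq_ge_term (I : eqType) (r : seq I) (P : pred I) (F : I -> R) e :
  e \in r -> P e -> (forall i, i \in r -> P i -> 0 <= F i) ->
  F e <= \sum_(i <- r | P i) F i.
Proof.
move=> er Pe H; rewrite (big_rem e er) /= Pe lerDl big_seq_cond.
apply: sumr_ge0 => i /andP [ir Pi]; apply: H Pi; exact: mem_rem ir.
Qed.

Lemma sumMk (V : nmodType) (I : Type) (r : seq I) (P : pred I) (F : I -> V) :
  \sum_(i <- r | P i) F i = \sum_(i <- r) (if P i then F i else 0).
Proof. exact: big_mkcond. Qed.

End Common.

Section DD.
Variable R : realFieldType.
Variable n : nat.

Definition incone (G : seq 'cV[int]_n) (x : 'cV[R]_n) :=
  exists s : seq (R * 'cV[int]_n), (forall e, e \in s -> 0 <= e.1 /\ e.2 \in G) /\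
     x = \sum_(e <- s) e.1 *: mR R e.2.

Lemma dd_base : exists G : seq 'cV[int]_n, forall x, incone G x.
Proof.
pose G : seq 'cV[int]_n := [seq delta_mx j 0 | j <- enum 'I_n] ++ [seq - delta_mx j 0 | j <- enum 'I_n].
exists G => x.
exists [seq (if 0 <= x j 0 then (x j 0, delta_mx j 0) else (- x j 0, - delta_mx j 0)) | j <- enum 'I_n].
split.
  move=> e /mapP [j _ ->]; case: ifP => h /=; split => //.
  - by rewrite /G mem_cat; apply/orP; left; apply/mapP; exists j; rewrite ?mem_enum.
  - by rewrite oppr_ge0 ltW // ltNge h.
  - by rewrite /G mem_cat; apply/orP; right; apply/mapP; exists j; rewrite ?mem_enum.
rewrite big_map big_enum /=.
rewrite {1}(matrix_sum_delta x) /=.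
apply: eq_big => // j _; rewrite big_ord1.
have hd : mR R (delta_mx j 0 : 'cV[int]_n) = delta_mx j 0.
  by apply/matrixP => a b; rewrite !mxE; case: (_ && _).
case: ifP => _ /=; first by rewrite hd.
by rewrite mRN hd scalerN scaleNr opprK.
Qed.

Lemma dd (A : seq 'rV[int]_n) : exists G : seq 'cV[int]_n,
  (forall g, g \in G -> forall a, a \in A -> pairing a g <= 0) /\
  (forall x : 'cV[R]_n, (forall a, a \in A -> (mR R a *m x) 0 0 <= 0) -> incone G x).
Proof.
elim: A => [|a A [G' [HG1 HG2]]].
  have [G HG] := dd_base; exists G; split => // g _ a //.
pose pa (v : 'cV[int]_n) := pairing a v.
pose comb (pq : 'cV[int]_n * 'cV[int]_n) := pa pq.1 *: pq.2 - pa pq.2 *: pq.1.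
pose cnd (pq : 'cV[int]_n * 'cV[int]_n) := (0 < pa pq.1) && (pa pq.2 < 0).
exists ([seq g <- G' | pa g <= 0] ++
        [seq comb pq | pq <- [seq (p, q) | p <- G', q <- G'] & cnd pq]).
split.
  move=> g; rewrite mem_cat => /orP [].
    rewrite mem_filter => /andP [h1 h2] b; rewrite inE => /orP [/eqP ->//|].
    exact: HG1.
  case/mapP => pq; rewrite mem_filter => /andP [cpq].
  case/allpairsP => [[p q] [/= pG qG epq]] -> b.
  move: cpq; rewrite epq /cnd /= => /andP [c1 c2].
  rewrite inE /comb /= => /orP [/eqP ->|bA].
    by rewrite pairingB !pairingZ -/(pa p) -/(pa q) mulrC subrr.
  rewrite pairingB !pairingZ subr_le0; apply: (@le_trans _ _ 0).
    by rewrite pmulr_rle0 //; exact: (HG1 q qG b bA).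
  by rewrite nmulr_rge0 //; exact: (HG1 p pG b bA).
move=> x Hx.
have [s [Hs1 Hs2]] := HG2 x (fun b bA => Hx b (@mem_behead _ (a :: A) b bA)).
pose f (e : R * 'cV[int]_n) : R := e.1 * (pa e.2)%:~R.
pose Sp := \sum_(e <- s | 0 < pa e.2) f e.
pose Sn := - \sum_(e <- s | pa e.2 < 0) f e.
have Sp_ge0 : 0 <= Sp.
  rewrite /Sp big_seq_cond; apply: sumr_ge0 => e /andP [es h].
  by rewrite /f mulr_ge0 ?(Hs1 e es).1 // ler0z ltW.
have Sn_ge0 : 0 <= Sn.
  rewrite /Sn oppr_ge0 big_seq_cond; apply: sumr_le0 => e /andP [es h].
  by rewrite /f mulr_ge0_le0 ?(Hs1 e es).1 // lerz0 ltW.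
have Hax : (mR R a *m x) 0 0 = \sum_(e <- s) f e.
  rewrite Hs2 mulmx_sumr summxE; apply: eq_bigr => e _.
  by rewrite -scalemxAr mxE mR_pairing.
have SpSn : Sp <= Sn.
  rewrite -subr_le0 /Sn opprK /Sp [X in X + _]sumMk [X in _ + X]sumMk -big_split /=.
  rewrite (_ : \sum_(i <- s) _ = \sum_(e <- s) f e).
    by rewrite -Hax; exact: Hx a (mem_head _ _).
  apply: eq_bigr => e _; case: (ltgtP (pa e.2) 0) => h.
  - by rewrite add0r.
  - by rewrite addr0.
  - by rewrite /f h mulr0 addr0.
pose k (e : R * 'cV[int]_n) : R := if pa e.2 == 0 then 1 else 1 - Sp / Sn.
have k_ge0 e : 0 <= k e.
  rewrite /k; case: ifP => // _; rewrite subr_ge0.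
  have [->|Sn0] := eqVneq Sn 0; first by rewrite invr0 mulr0.
  by rewrite ler_pdivrMr ?mul1r // lt_def Sn0 Sn_ge0.
pose v (e : R * 'cV[int]_n) := mR R e.2.
pose s1 := [seq (e.1 * k e, e.2) | e <- s & pa e.2 <= 0].
pose s2 := [seq (ep.1.1 * ep.2.1 / Sn, comb (ep.1.2, ep.2.2)) |
             ep <- [seq (e1, e2) | e1 <- s, e2 <- s] & cnd (ep.1.2, ep.2.2)].
exists (s1 ++ s2); split.
  move=> e; rewrite mem_cat => /orP [].
    case/mapP => e0; rewrite mem_filter => /andP [h e0s] -> /=.
    have [h1 h2] := Hs1 e0 e0s; split; first by rewrite mulr_ge0.
    by rewrite mem_cat mem_filter h h2.
  case/mapP => ep; rewrite mem_filter => /andP [cep].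
  case/allpairsP => [[e1 e2] [/= e1s e2s epe]] -> /=.
  have [h11 h12] := Hs1 e1 e1s; have [h21 h22] := Hs1 e2 e2s.
  rewrite epe /=; split; first by rewrite divr_ge0 ?mulr_ge0.
  rewrite mem_cat; apply/orP; right; apply/mapP; exists (e1.2, e2.2) => //.
  rewrite mem_filter; move: cep; rewrite epe /= => -> /=.
  by apply: allpairs_f.
pose T := \sum_(e <- s | pa e.2 < 0) e.1 *: v e.
have Es1 : \sum_(e <- s1) e.1 *: mR R e.2 =
    \sum_(e <- s) (if pa e.2 <= 0 then (e.1 * k e) *: v e else 0).
  by rewrite big_map big_filter sumMk.
have Es2 : \sum_(e <- s2) e.1 *: mR R e.2 = (Sp / Sn) *: T +
    \sum_(e <- s) (if 0 < pa e.2 then (Sn / Sn * e.1) *: v e else 0).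
  rewrite big_map big_filter sumMk big_allpairs /=.
  rewrite /Sp mulr_suml scaler_suml [X in X + _]sumMk -big_split /=.
  apply: eq_bigr => e1 _.
  case: ifP => h1 /=; last first.
    rewrite add0r big1 // => e2 _; by rewrite /cnd /= h1.
  rewrite /T scaler_sumr.
  have -> : (Sn / Sn * e1.1) *: v e1 = \sum_(e2 <- s)
      (if pa e2.2 < 0 then (- f e2 * (e1.1 / Sn)) *: v e1 else 0).
    rewrite -sumMk -scaler_suml -mulr_suml sumrN; congr (_ *: _); rewrite -/Sn; ring.
  rewrite [X in _ = X + _]sumMk -big_split /=.
  apply: eq_bigr => e2 _; rewrite /cnd /= h1 /=.
  case: ifP => h2; last by rewrite addr0.
  rewrite /comb /v /= mRB !mRZ scalerBr !scalerA /f.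
  rewrite -scaleNr; congr (_ *: _ + _ *: _); ring.
rewrite big_cat /= Es1 Es2 /T scaler_sumr.
rewrite [X in _ + (X + _)]sumMk addrA -big_split -big_split /= Hs2 big_seq.
rewrite [RHS]big_seq; apply: eq_bigr => e es.
rewrite /k /v; case: (ltgtP (pa e.2) 0) => h.
- by rewrite addr0 scalerA -scalerDl; congr (_ *: _); ring.
- rewrite !add0r.
  have [Sn0|Sn0] := eqVneq Sn 0; last by rewrite divff // mul1r.
  suff -> : e.1 = 0 by rewrite mulr0 !scale0r.
  have fe0 : f e = 0.
    apply/eqP; rewrite eq_le; apply/andP; split; last first.
      by rewrite /f mulr_ge0 ?(Hs1 e es).1 // ler0z ltW.
    have : f e <= Sp.
      apply: (@sum_seq_ge_term _ _ s (fun e => 0 < pa e.2)) => // e0 e0s h0.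
      by rewrite /f mulr_ge0 ?(Hs1 e0 e0s).1 // ler0z ltW.
    move=> H; apply: le_trans H _; by rewrite -Sn0.
  move: fe0; rewrite /f => /eqP; rewrite mulf_eq0 intr_eq0 (gt_eqF h) orbF.
  by move/eqP.
- by rewrite mulr1 !addr0.
Qed.

Lemma dd_nonneg (A : seq 'rV[int]_n) (d : 'rV[R]_n) :
  (forall l : 'cV[int]_n, (forall a, a \in A -> pairing a l <= 0) ->
      0 <= (d *m mR R l) 0 0) ->
  forall x : 'cV[R]_n, (forall a, a \in A -> (mR R a *m x) 0 0 <= 0) ->
      0 <= (d *m x) 0 0.
Proof.
move=> hd x hx; have [G [hG1 hG2]] := dd A.
have [s [hs ->]] := hG2 x hx.
rewrite mulmx_sumr summxE big_seq; apply: sumr_ge0 => e es.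
have [h1 h2] := hs e es.
rewrite -scalemxAr mxE mulr_ge0 // hd // => a aA; exact: hG1.
Qed.

End DD.

Lemma perm_inj_map (T : eqType) (f : T -> T) (s : seq T) :
  uniq s -> injective f -> {subset map f s <= s} -> perm_eq (map f s) s.
Proof.
move=> us inj sub; have ums : uniq (map f s) by rewrite map_inj_uniq.
apply: uniq_perm => //; apply: (uniq_min_size ums sub _).2.
by rewrite size_map.
Qed.

Section Weyl.
Variable n : nat.
Variable rd : seq ('rV[int]_n * 'cV[int]_n).
Hypothesis hrd : root_datum rd.

Lemma pair2 p : p \in rd -> p.1 *m p.2 = 2%:M.
Proof.
move=> pr; case: hrd => _ h2 _ _ _.
by rewrite [LHS]mx11_scalar; have := h2 p pr; rewrite /pairing => ->.
Qed.

Lemma refl_l (p : 'rV[int]_n * 'cV[int]_n) (l : 'cV[int]_n) : refl p *m l = l - pairing p.1 l *: p.2.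
Proof.
rewrite /refl mulmxBl mul1mx -mulmxA [p.1 *m l]mx11_scalar mul_mx_scalar.
by [].
Qed.

Lemma refl_r (p : 'rV[int]_n * 'cV[int]_n) (b : 'rV[int]_n) : b *m refl p = b - pairing b p.2 *: p.1.
Proof.
rewrite /refl mulmxBr mulmx1 mulmxA [b *m p.2]mx11_scalar mul_scalar_mx.
by [].
Qed.

Lemma refl_sq p : p \in rd -> refl p *m refl p = 1%:M.
Proof.
move=> pr; rewrite /refl mulmxBl mul1mx mulmxBr mulmx1.
have MM : p.2 *m p.1 *m (p.2 *m p.1) = 2 *: (p.2 *m p.1).
  by rewrite mulmxA -(mulmxA p.2) (pair2 pr) mul_mx_scalar -scalemxAl.
rewrite MM; apply/matrixP => i j; rewrite !mxE; ring.
Qed.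

Lemma inW_mul v w : inW rd v -> inW rd w -> inW rd (v *m w).
Proof.
elim => [|p v0 pr _ IH] hw; first by rewrite mul1mx.
by rewrite -mulmxA; apply: inWs => //; apply: IH.
Qed.

Lemma inW_refl p : p \in rd -> inW rd (refl p).
Proof. by move=> pr; rewrite -[refl p]mulmx1; apply: inWs => //; apply: inW1. Qed.

Lemma inW_inv w : inW rd w -> exists w', inW rd w' /\ w' *m w = 1%:M.
Proof.
elim => [|p w0 pr hw0 [w' [h1 h2]]]; first by exists 1%:M; split; [exact: inW1|rewrite mulmx1].
exists (w' *m refl p); split; first by apply: inW_mul => //; exact: inW_refl.
by rewrite mulmxA -(mulmxA w') refl_sq // mulmx1.
Qed.

Lemma inW_unit w : inW rd w -> w \in unitmx.
Proof. by case/inW_inv => w' [_ h]; have [] := mulmx1_unit h. Qed.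

Lemma invmx_W w : inW rd w -> inW rd (invmx w).
Proof.
move=> hw; have [w' [h1 h2]] := inW_inv hw.
suff -> : invmx w = w' by [].
have u := inW_unit hw.
by rewrite -[invmx w]mulmx1 -(mulmx1C h2) mulmxA mulVmx // mul1mx.
Qed.

Lemma mulVW w : inW rd w -> invmx w *m w = 1%:M.
Proof. by move=> hw; rewrite mulVmx // inW_unit. Qed.
Lemma mulWV w : inW rd w -> w *m invmx w = 1%:M.
Proof. by move=> hw; rewrite mulmxV // inW_unit. Qed.

Definition roots := map fst rd.
Definition coroots := map snd rd.

Lemma root_act w b : inW rd w -> b \in roots -> b *m w \in roots.
Proof.
move=> hw; elim: hw b => [|p w0 pr hw0 IH] b hb; first by rewrite mulmx1.
rewrite mulmxA refl_r; apply: IH.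
case: hrd => _ _ h3 _ _.
case/mapP: hb => q qr ->; exact: h3 p q pr qr.
Qed.

Lemma coroot_refl p c : p \in rd -> c \in coroots -> refl p *m c \in coroots.
Proof.
move=> pr; case/mapP => q qr ->; rewrite refl_l.
case: hrd => _ _ _ h4 _; exact: h4 p q pr qr.
Qed.

Lemma root_refl p b : p \in rd -> b \in roots -> b *m refl p \in roots.
Proof. by move=> pr hb; apply: root_act => //; apply: inW_refl. Qed.

Lemma roots_uniq : uniq roots.
Proof. by case: hrd => [[]]. Qed.
Lemma coroots_uniq : uniq coroots.
Proof. by case: hrd => [[]]. Qed.

Lemma perm_roots p : p \in rd -> perm_eq (map (fun b => b *m refl p) roots) roots.
Proof.
move=> pr; apply: perm_inj_map; first exact: roots_uniq.
  by move=> b1 b2 h; rewrite -[b1]mulmx1 -(refl_sq pr) mulmxA h -mulmxA refl_sq // mulmx1.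
by move=> b /mapP [b0 hb0 ->]; apply: root_refl.
Qed.

Lemma perm_coroots p : p \in rd -> perm_eq (map (fun c => refl p *m c) coroots) coroots.
Proof.
move=> pr; apply: perm_inj_map; first exact: coroots_uniq.
  by move=> b1 b2 h; rewrite -[b1]mul1mx -(refl_sq pr) -mulmxA h mulmxA refl_sq // mul1mx.
by move=> b /mapP [b0 hb0 ->]; apply: coroot_refl.
Qed.

Inductive inspan : 'cV[int]_n -> Prop :=
 | sp0 : inspan 0
 | spc p c v : p \in rd -> inspan v -> inspan (c *: p.2 + v).

Lemma inspanD u v : inspan u -> inspan v -> inspan (u + v).
Proof.
elim => [|p c u0 pr _ IH] hv; first by rewrite add0r.
by rewrite -addrA; apply: spc => //; apply: IH.
Qed.

Lemma inspanN u : inspan u -> inspan (- u).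
Proof.
elim => [|p c u0 pr _ IH]; first by rewrite oppr0; apply: sp0.
by rewrite opprD -scaleNr; apply: spc.
Qed.

Lemma inW_span w l : inW rd w -> inspan (w *m l - l).
Proof.
elim => [|p w0 pr _ IH]; first by rewrite mul1mx subrr; apply: sp0.
rewrite -mulmxA refl_l -addrAC -scaleNr addrC; exact: spc.
Qed.

End Weyl.

Section Forms.
Variable n : nat.
Variable rd : seq ('rV[int]_n * 'cV[int]_n).
Hypothesis hrd : root_datum rd.
Variable F : realFieldType.

Notation mR := (mR F).

Definition Bv (a b : 'rV[F]_n) :=
  \sum_(c <- coroots rd) (a *m mR c) 0 0 * (b *m mR c) 0 0.
Definition B (x y : 'cV[F]_n) :=
  \sum_(a <- roots rd) (mR a *m x) 0 0 * (mR a *m y) 0 0.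

Lemma Bv_sym a b : Bv a b = Bv b a.
Proof. by apply: eq_bigr => c _; rewrite mulrC. Qed.
Lemma B_sym x y : B x y = B y x.
Proof. by apply: eq_bigr => c _; rewrite mulrC. Qed.

Lemma BvDl a1 a2 b : Bv (a1 + a2) b = Bv a1 b + Bv a2 b.
Proof. by rewrite /Bv -big_split; apply: eq_bigr => c _; rewrite mulmxDl mxE mulrDl. Qed.
Lemma BvZl k a b : Bv (k *: a) b = k * Bv a b.
Proof. by rewrite /Bv mulr_sumr; apply: eq_bigr => c _; rewrite -scalemxAl mxE mulrA. Qed.
Lemma BvNl a b : Bv (- a) b = - Bv a b.
Proof. by rewrite -scaleN1r BvZl mulN1r. Qed.
Lemma Bv0l b : Bv 0 b = 0.
Proof. by rewrite -(scale0r 0) BvZl mul0r. Qed.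
Lemma BDl x1 x2 y : B (x1 + x2) y = B x1 y + B x2 y.
Proof. by rewrite /B -big_split; apply: eq_bigr => c _; rewrite mulmxDr mxE mulrDl. Qed.
Lemma BZl k x y : B (k *: x) y = k * B x y.
Proof. by rewrite /B mulr_sumr; apply: eq_bigr => c _; rewrite -scalemxAr mxE mulrA. Qed.
Lemma BNl x y : B (- x) y = - B x y.
Proof. by rewrite -scaleN1r BZl mulN1r. Qed.

Lemma Bv_refl p a b : p \in rd ->
  Bv (a *m mR (refl p)) (b *m mR (refl p)) = Bv a b.
Proof.
move=> pr; rewrite /Bv -[RHS](perm_big _ (perm_coroots hrd pr)) [RHS]big_map /coroots !big_map.
by apply: eq_bigr => c _; rewrite -!mulmxA -!mRM.
Qed.

Lemma B_refl p x y : p \in rd ->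
  B (mR (refl p) *m x) (mR (refl p) *m y) = B x y.
Proof.
move=> pr; rewrite /B -[RHS](perm_big _ (perm_roots hrd pr)) [RHS]big_map /roots !big_map.
by apply: eq_bigr => c _; rewrite !mulmxA -!mRM.
Qed.

Lemma mR_refl_root p : p \in rd -> mR p.1 *m mR (refl p) = - mR p.1.
Proof.
move=> pr; rewrite -mRM refl_r.
case: hrd => _ h2 _ _ _; rewrite h2 // -mRN; congr mR.
apply/matrixP => i j; rewrite !mxE; ring.
Qed.

Lemma mR_refl_coroot p : p \in rd -> mR (refl p) *m mR p.2 = - mR p.2.
Proof.
move=> pr; rewrite -mRM refl_l.
case: hrd => _ h2 _ _ _; rewrite h2 // -mRN; congr mR.
apply/matrixP => i j; rewrite !mxE; ring.
Qed.

Lemma mR_refl_r p (b : 'rV[F]_n) :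
  b *m mR (refl p) = b - (b *m mR p.2) 0 0 *: mR p.1.
Proof.
rewrite /refl mRB mR1 mRM mulmxBr mulmx1 mulmxA.
congr (_ - _); by rewrite {1}(mx11_scalar (b *m mR p.2)) mul_scalar_mx.
Qed.

Lemma mR_refl_l p (y : 'cV[F]_n) :
  mR (refl p) *m y = y - (mR p.1 *m y) 0 0 *: mR p.2.
Proof.
rewrite /refl mRB mR1 mRM mulmxBl mul1mx -mulmxA.
congr (_ - _); by rewrite {1}(mx11_scalar (mR p.1 *m y)) mul_mx_scalar.
Qed.

Lemma K2 p b : p \in rd ->
  2 * Bv (mR p.1) b = (b *m mR p.2) 0 0 * Bv (mR p.1) (mR p.1).
Proof.
move=> pr; have := Bv_refl (mR p.1) b pr.
rewrite mR_refl_root // mR_refl_r BvNl Bv_sym BvDl BvNl BvZl.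
rewrite [Bv b _]Bv_sym opprB => h.
by rewrite mulr_natl mulr2n -{1}h subrK.
Qed.

Lemma K1 p y : p \in rd ->
  2 * B (mR p.2) y = (mR p.1 *m y) 0 0 * B (mR p.2) (mR p.2).
Proof.
move=> pr; have := B_refl (mR p.2) y pr.
rewrite mR_refl_coroot // mR_refl_l BNl B_sym BDl BNl BZl.
rewrite [B y _]B_sym opprB => h.
by rewrite mulr_natl mulr2n -{1}h subrK.
Qed.

Lemma sum_sq_ge (I : eqType) (r : seq I) (f : I -> F) i :
  i \in r -> f i * f i <= \sum_(j <- r) f j * f j.
Proof.
move=> ir; apply: (@sum_seq_ge_term _ _ r xpredT (fun j => f j * f j)) => // j _ _.
by rewrite -expr2 sqr_ge0.
Qed.

Lemma Bv_pos p : p \in rd -> 0 < Bv (mR p.1) (mR p.1).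
Proof.
move=> pr; apply: lt_le_trans (sum_sq_ge _ (map_f snd pr)).
case: hrd => _ h2 _ _ _; rewrite /= mR_pairing h2 //; by rewrite mulr_gt0 ?ltr0n.
Qed.

Lemma B_pos p : p \in rd -> 0 < B (mR p.2) (mR p.2).
Proof.
move=> pr; apply: lt_le_trans (sum_sq_ge _ (map_f fst pr)).
case: hrd => _ h2 _ _ _; rewrite /= mR_pairing h2 //; by rewrite mulr_gt0 ?ltr0n.
Qed.

Lemma sum_sq_eq0 (I : eqType) (r : seq I) (f : I -> F) :
  \sum_(j <- r) f j * f j = 0 -> forall i, i \in r -> f i = 0.
Proof.
move=> h i ir; have := sum_sq_ge f ir; rewrite h => h1.
by apply/eqP; rewrite -sqrf_eq0 eq_le expr2 h1 /= -expr2 sqr_ge0.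
Qed.

Lemma nondeg d : inspan rd d -> (forall b, b \in roots rd -> pairing b d = 0) -> d = 0.
Proof.
move=> hd hb.
have [u [Hu1 Hu2]] : exists u : 'rV[F]_n, (forall b, (b *m mR d) 0 0 = Bv u b) /\
    (forall y : 'cV[F]_n, (forall b, b \in roots rd -> (mR b *m y) 0 0 = 0) -> (u *m y) 0 0 = 0).
  elim: hd {hb} => [|p c v pr _ [u [h1 h2]]].
    exists 0; split => [b|y _]; first by rewrite mR0 mulmx0 mxE Bv0l.
    by rewrite mul0mx mxE.
  exists ((c%:~R * 2 / Bv (mR p.1) (mR p.1)) *: mR p.1 + u); split.
    move=> b; rewrite mRD mRZ mulmxDr -scalemxAr mxE (mxE _ _ 0 0) h1 BvDl BvZl.
    congr (_ + _); rewrite [Bv _ b]Bv_sym.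
    have hp := Bv_pos pr; have := K2 b pr => hk.
    have -> : Bv b (mR p.1) = (b *m mR p.2) 0 0 * Bv (mR p.1) (mR p.1) / 2.
      by rewrite Bv_sym -hk [2 * _]mulrC mulfK // pnatr_eq0.
    field; by rewrite lt0r_neq0.
  move=> y hy; rewrite mulmxDl mxE h2 // addr0 -scalemxAl mxE.
  by rewrite hy ?mulr0 // map_f.
have h0 : (u *m mR d) 0 0 = 0.
  apply: Hu2 => b bin; by rewrite mR_pairing hb.
have hBu : Bv u u = 0 by rewrite -Hu1.
have hall : forall c, c \in coroots rd -> (u *m mR c) 0 0 = 0 := sum_sq_eq0 hBu.
apply/matrixP => i j; rewrite (ord1 j) mxE.
have := Hu1 (delta_mx 0 i).
rewrite /Bv big1_seq => [|c /andP [_ cin]]; last by rewrite hall // mul0r.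
rewrite -rowE mxE mxE => /eqP; rewrite intr_eq0 => /eqP ->.
by [].
Qed.

End Forms.

Fixpoint allseqs (T : eqType) (L : seq T) k : seq (seq T) :=
  if k is k'.+1 then [seq x :: t | x <- L, t <- allseqs L k'] else [:: [::]].

Lemma mem_allseqs (T : eqType) (L : seq T) t : all (mem L) t -> t \in allseqs L (size t).
Proof.
elim: t => [|x t IH] //= /andP [xL tL].
by apply: (allpairs_f (fun x t => x :: t)) => //; apply: IH.
Qed.

Lemma finite_inj (T U : eqType) (x0 : T) (P : T -> Prop) (f : T -> U) (S : seq U) :
  P x0 -> (forall x, P x -> f x \in S) ->
  (forall x y, P x -> P y -> f x = f y -> x = y) ->
  exists s : seq T, (forall x, P x -> x \in s) /\ (forall x, x \in s -> P x).
Proof.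
move=> P0 hS hinj.
pose g u := match excluded_middle_informative (exists x, P x /\ f x = u) with
  | left H => proj1_sig (constructive_indefinite_description _ H)
  | right _ => x0 end.
have hg u : P (g u) /\ ((exists x, P x /\ f x = u) -> f (g u) = u).
  rewrite /g; case: excluded_middle_informative => [H|H].
    by case: constructive_indefinite_description => y [h1 h2].
  by split => // h; case: (H h).
exists (map g S); split.
  move=> x Px; apply/mapP; exists (f x); first exact: hS.
  have [h1 h2] := hg (f x); apply: hinj => //; rewrite h2 //; by exists x.
by move=> x /mapP [u _ ->]; case: (hg u).
Qed.

Section Finite.
Variable n : nat.
Variable rd : seq ('rV[int]_n * 'cV[int]_n).
Hypothesis hrd : root_datum rd.

Lemma W_finite : exists Wl : seq 'M[int]_n,
  (forall w, inW rd w -> w \in Wl) /\ (forall w, w \in Wl -> inW rd w).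
Proof.
apply: (@finite_inj _ _ 1%:M (inW rd) (fun w => map (fun b => b *m w) (roots rd))
          (allseqs (roots rd) (size (roots rd)))).
- exact: inW1.
- move=> w hw; rewrite -(size_map (fun b => b *m w)); apply: mem_allseqs.
  by apply/allP => b /mapP [b0 hb0 ->]; apply: root_act.
move=> w w' hw hw' /eq_in_map heq.
have hl (l : 'cV[int]_n) : w *m l = w' *m l.
  apply/eqP; rewrite -subr_eq0; apply/eqP; apply: (@nondeg n rd hrd rat).
    have -> : w *m l - w' *m l = (w *m l - l) + - (w' *m l - l).
      by rewrite opprB addrA subrK.
    by apply: inspanD; [apply: inW_span | apply/inspanN/inW_span].
  by move=> b hb; rewrite pairingB /pairing !mulmxA heq // subrr.
apply/matrixP => i j; have := congr1 (fun M : 'cV[int]_n => M i 0) (hl (delta_mx j 0)).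
by rewrite -!colE !mxE.
Qed.

Variable F : realFieldType.
Notation mR := (mR F).

Definition adom (xi : 'cV[int]_n) (x : 'cV[F]_n) :=
  forall p, p \in rd -> 0 < pairing p.1 xi -> (mR p.1 *m x) 0 0 <= 0.

Lemma argmin_seq (T : eqType) (s : seq T) (f : T -> F) x0 :
  x0 \in s -> exists x, x \in s /\ forall y, y \in s -> f x <= f y.
Proof.
elim: s x0 => [|a s IH] x0 //= _.
have [sn|sn] := eqVneq s [::].
  by exists a; split; rewrite ?mem_head // => y; rewrite sn inE => /eqP ->.
have [y0 ys] : exists y, y \in s by case: s sn {IH} => // b s' _; exists b; rewrite mem_head.
have [x [xs hx]] := IH y0 ys.
have [le|lt] := leP (f a) (f x).
  exists a; split; first exact: mem_head.
  by move=> y; rewrite inE => /orP [/eqP ->//|/hx]; apply: le_trans.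
exists x; split; first by rewrite inE xs orbT.
by move=> y; rewrite inE => /orP [/eqP ->|/hx //]; apply: ltW.
Qed.

Lemma exists_adom xi (x : 'cV[F]_n) : exists u, inW rd u /\ adom xi (mR u *m x).
Proof.
have [Wl [hW1 hW2]] := W_finite.
have [u [uW hu]] := argmin_seq (fun u => B rd (mR u *m x) (mR xi)) (hW1 _ (inW1 rd)).
exists u; split; first exact: hW2.
move=> p pr hpx; rewrite leNgt; apply/negP => ht.
set y := mR u *m x in ht.
have hv : inW rd (refl p *m u) by apply: inWs => //; apply: hW2.
have := hu _ (hW1 _ hv); rewrite mRM -mulmxA -/y mR_refl_l BDl BNl BZl.
have hk := K1 hrd (mR xi) pr; have hp := B_pos hrd F pr.
have hpos : 0 < B rd (mR p.2) (mR xi).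
  have h2 : 0 < 2 * B rd (mR p.2) (mR xi).
    by rewrite hk mulr_gt0 // mR_pairing ltr0z.
  by rewrite pmulr_rgt0 in h2.
rewrite -subr_ge0 addrAC subrr add0r oppr_ge0 => h.
have : 0 < (mR p.1 *m y) 0 0 * B rd (mR p.2) (mR xi) by rewrite mulr_gt0.
by rewrite ltNge h.
Qed.

End Finite.

Section AddRepr.
Variable R : realFieldType.
Variable n : nat.

Lemma add_repr (f : 'cV[int]_n -> R) : (forall l m, f (l + m) = f l + f m) ->
  forall l, f l = (\row_j f (delta_mx j 0) *m mR R l) 0 0.
Proof.
move=> h.
have h0 : f 0 = 0 by have := h 0 0; rewrite addr0; lra.
have hN v : f (- v) = - f v by have := h v (- v); rewrite subrr h0; lra.
have hMn v k : f (v *+ k) = f v *+ k.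
  by elim: k => [|k IH]; rewrite ?mulr0n ?h0 // !mulrS h IH.
have hZ (c : int) v : f (c *: v) = c%:~R * f v.
  rewrite -[c]intz scaler_int intz; case: c => k /=.
    by rewrite hMn mulr_natl.
  by rewrite hN hMn NegzE intrN mulNr mulr_natl.
move=> l; rewrite {1}(matrix_sum_delta l); under eq_bigr => i _ do rewrite big_ord1.
rewrite (big_morph f h h0) mxE; apply: eq_bigr => j _.
by rewrite hZ !mxE mulrC (ord1 0).
Qed.

End AddRepr.

Section Cocycle.
Variable n : nat.
Variable rd : seq ('rV[int]_n * 'cV[int]_n).
Hypothesis hrd : root_datum rd.
Variable xi : 'cV[int]_n.
Variable R : realFieldType.
Variable K : fieldType.
Variable val : K -> R.
Hypothesis hval : forall x y : K, x != 0 -> y != 0 -> val (x * y) = val x + val y.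
Variable gamma : 'M[int]_n -> 'cV[int]_n -> K.
Hypothesis hg : cocycle rd xi val gamma.

Lemma C_add w l m : inW rd w -> val (gamma w (l + m)) = val (gamma w l) + val (gamma w m).
Proof. by case: hg => h1 h2 _ _ _ hw; rewrite h2 // hval // h1. Qed.

Lemma C_coc v w l : inW rd v -> inW rd w ->
  val (gamma (v *m w) l) = val (gamma v (w *m l)) + val (gamma w l).
Proof. by case: hg => h1 _ h3 _ _ hv hw; rewrite h3 // hval // h1. Qed.

Lemma C_pos w l : inW rd w -> antidom rd xi l -> 0 <= val (gamma w l).
Proof. by case: hg => _ _ _ h4 _; apply: h4. Qed.

Lemma C_mono v u l : inW rd v -> inW rd u -> antidom rd xi (u *m l) ->
  val (gamma u l) <= val (gamma v l).
Proof.
move=> hv hu ha.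
have -> : v = (v *m invmx u) *m u by rewrite -mulmxA (mulVW hrd hu) mulmx1.
have hvu : inW rd (v *m invmx u) by apply: inW_mul => //; apply: invmx_W.
by rewrite C_coc // lerDr; apply: C_pos.
Qed.

Lemma adom_int l : exists u, inW rd u /\ antidom rd xi (u *m l).
Proof.
have [u [hu ha]] := exists_adom hrd xi (mR R l).
exists u; split => // p pr hp; have := ha p pr hp.
by rewrite -mRM mR_pairing lerz0.
Qed.

Lemma gdom_spec l : exists u, [/\ inW rd u, antidom rd xi (u *m l) &
  gdom rd xi gamma l = gamma u l].
Proof.
rewrite /gdom; set u := epsilon _ _.
have := epsilon_spec (inhabits (1%:M : 'M[int]_n))
  (fun w => inW rd w /\ antidom rd xi (w *m l)) (adom_int l).
by rewrite -/u; case=> h1 h2; exists u.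
Qed.

Lemma val_gdom v l : inW rd v -> val (gdom rd xi gamma l) <= val (gamma v l).
Proof. by move=> hv; have [u [hu ha ->]] := gdom_spec l; apply: C_mono. Qed.

Lemma val_gdom_eq u l : inW rd u -> antidom rd xi (u *m l) ->
  val (gdom rd xi gamma l) = val (gamma u l).
Proof.
move=> hu ha; have [u' [hu' ha' ->]] := gdom_spec l.
by apply/eqP; rewrite eq_le !C_mono.
Qed.


Lemma main_thm z : Vgamma rd xi val gamma z <->
  in_hull (fun p => exists2 w, inW rd w & p = (fun l => - zw val gamma w l)) z.
Proof.
split; last first.
  case=> m [c [pt [hc hs hS hz]]]; split.
    move=> l l'; rewrite !hz -big_split; apply: eq_bigr => i _ /=.
    have [w hw ->] := hS i; rewrite /zw !opprK C_add ?mulrDr //.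
    exact: invmx_W.
  move=> l; rewrite hz -[val _]mul1r -hs mulr_suml; apply: ler_sum => i _.
  apply: ler_wpM2l => //; have [w hw ->] := hS i; rewrite /zw opprK.
  by apply: val_gdom; apply: invmx_W.
case=> hadd hz.
have hrep := add_repr hadd.
set Zr := \row_j z (delta_mx j 0) in hrep.
have [Wl [hW1 hW2]] := W_finite hrd.
pose Gr w : 'rV[R]_n := \row_j val (gamma w (delta_mx j 0)).
have hGr w l : inW rd w -> val (gamma w l) = (Gr w *m mR R l) 0 0.
  move=> hw; apply: (@add_repr R n (fun l => val (gamma w l))) => l1 l2; exact: C_add.
have hWi (i : 'I_(size Wl)) : inW rd Wl`_i by apply: hW2; apply: mem_nth.
have [[c [hc hs hZ]]|[phi hphi]] := farkas_conv (fun i : 'I_(size Wl) => Gr Wl`_i) Zr.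
  exists (size Wl), c, (fun i => fun l => - zw val gamma (invmx Wl`_i) l).
  split => //.
    by move=> i; exists (invmx Wl`_i) => //; apply: invmx_W.
  move=> t; rewrite hrep hZ mulmx_suml summxE; apply: eq_bigr => i _.
  by rewrite /zw opprK invmxK -scalemxAl mxE hGr.
exfalso.
pose x := phi^T.
have ipx (v : 'rV[R]_n) : ip phi v = (v *m x) 0 0.
  by rewrite /ip mxE; apply: eq_bigr => j _; rewrite mxE mulrC.
have [u [hu ha]] := exists_adom hrd xi x.
have uW := hW1 _ hu.
have iu : (index u Wl < size Wl)%N by rewrite index_mem.
have := hphi (Ordinal iu); rewrite /= nth_index // !ipx.
apply/negP; rewrite -leNgt -subr_ge0.
have -> : (Zr *m x) 0 0 - (Gr u *m x) 0 0 = ((Zr - Gr u) *m x) 0 0.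
  by rewrite mulmxBl [in RHS]mxE [X in _ = _ + X]mxE.
set A := [seq p.1 | p <- rd & 0 < pairing p.1 xi].
have hA a : a \in A -> exists2 p, p \in rd & (0 < pairing p.1 xi) /\ a = p.1.
  by case/mapP => p; rewrite mem_filter => /andP [h1 h2] ->; exists p.
have := @dd_nonneg R n A ((Zr - Gr u) *m mR R (invmx u)).
have -> : (Zr - Gr u) *m x = (Zr - Gr u) *m mR R (invmx u) *m (mR R u *m x).
  by rewrite !mulmxA -(mulmxA (Zr - Gr u)) -mRM (mulVW hrd hu) mR1 mulmx1.
apply.
  move=> l hl; rewrite -mulmxA -mRM mulmxBl [X in 0 <= X]mxE [X in _ + X]mxE.
  rewrite -hrep -hGr; last exact: hu.
  have hl' : antidom rd xi (u *m (invmx u *m l)).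
    rewrite mulmxA (mulWV hrd hu) mul1mx => p pr hp.
    by apply: hl; apply/mapP; exists p => //; rewrite mem_filter pr andbT.
  rewrite subr_ge0 -(val_gdom_eq hu hl'); exact: hz.
move=> a /hA [p pr [hp ->]]; exact: ha.
Qed.

End Cocycle.

Unset Implicit Arguments.

Theorem lemma2p3 (n : nat) (rd : seq ('rV[int]_n * 'cV[int]_n))
  (hrd : root_datum rd) (xi : 'cV[int]_n) (hxi : regular rd xi)
  (R : realFieldType) (K : fieldType) (val : K -> R)
  (hval : forall x y : K, x != 0 -> y != 0 -> val (x * y) = val x + val y)
  (gamma : 'M[int]_n -> 'cV[int]_n -> K) (hg : cocycle rd xi val gamma) :
  forall z : 'cV[int]_n -> R,
    Vgamma rd xi val gamma z <->
    in_hull (fun p => exists2 w, inW rd w & p = (fun l => - zw val gamma w l)) z.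
Proof.
move=> z; exact: (main_thm hrd hval hg z).
Qed.
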